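(* Let $k$ be an algebraically closed field of characteristic $p>0$ and $H$ a finite-dimensional cocommutative connected Hopf algebra over $k$. Then every term $\Gamma^n(H)$, $n\ge0$, of the upper power series of $H$ is a normal Hopf subalgebra of $H$.
   Context: Connected: the coradical (sum of simple subcoalgebras) is one-dimensional. Coradical filtration: $H_n=\Delta^{-1}(H\otimes H_{n-1}+H_0\otimes H)$. Upper power series: $\Gamma^0(H)=k$, and for $n\ge1$ $\Gamma^n(H)$ is the subalgebra of $H$ generated by $H_{p^{n-1}}$. A Hopf subalgebra $K\subseteq H$ is normal if $\sum S(h_1)kh_2\in K$ and $\sum h_1kS(h_2)\in K$ for all $k\in K,h\in H$. *)

(* Defs.v *)
(* The tensor product H (x) H is modelled by coordinates in the fixed basis
   b := vbasis {:H} of H:  an element of H (x) H is a d x d matrix T over k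
   (d = dim H), T i j being the coefficient of b_i (x) b_j.
   H (x) H (x) H is modelled as d x (d*d) matrices (second and third factor
   flattened with mxvec). *)
From HB Require Import structures.
From mathcomp Require Import all_boot all_order all_algebra all_field.
Set Implicit Arguments. Unset Strict Implicit. Unset Printing Implicit Defensive.
Import Order.TTheory GRing.Theory Num.Theory.
Local Open Scope ring_scope.

Section Hopf.
Variables (k : fieldType) (H : falgType k).

Definition hdim := \dim {:H}.
Definition hbasis : hdim.-tuple H := vbasis {:H}.

Definition hcoord (x : H) : 'cV[k]_hdim := \col_i coord hbasis i x.

Definition tensor2 := 'M[k]_(hdim, hdim).
Definition tensor3 := 'M[k]_(hdim, hdim * hdim).

Definition tens (x y : H) : tensor2 := hcoord x *m (hcoord y)^T.
Definition tens3 (x y z : H) : tensor3 := hcoord x *m mxvec (tens y z).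

(* the linear extension to H (x) H of a (bilinear) map F : H -> H -> V,
   i.e. Sweedler sum  \sum F(t1, t2)  for t in H (x) H *)
Definition tsum (V : lmodType k) (F : H -> H -> V) (T : tensor2) : V :=
  \sum_(i < hdim) \sum_(j < hdim) T i j *: F hbasis`_i hbasis`_j.

Definition tmul (T U : tensor2) : tensor2 :=
  tsum (fun a b => tsum (fun c d => tens (a * c) (b * d)) U) T.

Definition tspace (U V : {vspace H}) : {vspace tensor2} :=
  <<[seq tens u v | u <- vbasis U, v <- vbasis V]>>%VS.

Definition is_hopf (D : H -> tensor2) (e : H -> k) (S : H -> H) : Prop :=
  [/\ linear D /\ scalar e /\ linear S,
      (* coassociativity: (D (x) id) D = (id (x) D) D *)
      forall x, tsum (fun a c => tsum (fun a1 a2 => tens3 a1 a2 c) (D a)) (D x)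
              = tsum (fun a c => tsum (fun c1 c2 => tens3 a c1 c2) (D c)) (D x),
      forall x, tsum (fun a b => e a *: b) (D x) = x /\
                tsum (fun a b => e b *: a) (D x) = x,
      ((D 1 = tens 1 1 /\ forall x y, D (x * y) = tmul (D x) (D y)) /\
       (e 1 = 1 /\ forall x y, e (x * y) = e x * e y)) &
      forall x, tsum (fun a b => S a * b) (D x) = e x *: 1 /\
                tsum (fun a b => a * S b) (D x) = e x *: 1].

Definition cocommutative (D : H -> tensor2) : Prop := forall x, (D x)^T = D x.

Definition subcoalgebra (D : H -> tensor2) (C : {vspace H}) : Prop :=
  forall x, x \in C -> D x \in tspace C C.

Definition simple_subcoalgebra (D : H -> tensor2) (C : {vspace H}) : Prop :=
  [/\ subcoalgebra D C, C != 0%VS &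
      forall C', subcoalgebra D C' -> (C' <= C)%VS -> C' = 0%VS \/ C' = C].

Definition is_coradical (D : H -> tensor2) (C0 : {vspace H}) : Prop :=
  (forall C, simple_subcoalgebra D C -> (C <= C0)%VS) /\
  exists s : seq {vspace H},
    (forall C, C \in s -> simple_subcoalgebra D C) /\
    C0 = (\sum_(C <- s) C)%VS.

Fixpoint coradfilt (D : H -> tensor2) (C0 : {vspace H}) (n : nat) : {vspace H} :=
  match n with
  | 0 => C0
  | m.+1 => (linfun D @^-1: (tspace fullv (coradfilt D C0 m) + tspace C0 fullv))%VS
  end.

Definition Gamma (D : H -> tensor2) (C0 : {vspace H}) (p n : nat) : {vspace H} :=
  match n with
  | 0 => (<[1]>)%VS
  | m.+1 => agenv (coradfilt D C0 (p ^ m))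
  end.

Definition hopf_subalgebra (D : H -> tensor2) (S : H -> H) (K : {vspace H}) : Prop :=
  [/\ 1 \in K, (K * K <= K)%VS, subcoalgebra D K
    & forall x, x \in K -> S x \in K].

Definition normal_hopf_subalgebra (D : H -> tensor2) (S : H -> H) (K : {vspace H}) : Prop :=
  hopf_subalgebra D S K /\
  forall x h, x \in K ->
    tsum (fun a b => S a * x * b) (D h) \in K /\
    tsum (fun a b => a * x * S b) (D h) \in K.

End Hopf.

(* Main.v *)
Require Import Defs.
From HB Require Import structures.
From mathcomp Require Import all_boot all_order all_algebra all_field.
Import GRing.Theory.
Local Open Scope ring_scope.

Set Implicit Arguments. Unset Strict Implicit. Unset Printing Implicit Defensive.

Section Lin.
Variable (k : fieldType).
Definition lin (V W : lmodType k) (f : V -> W) :=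
  forall a u v, f (a *: u + v) = a *: f u + f v.

Variables (V W : lmodType k) (f : V -> W) (hf : lin f).
Lemma lin0 : f 0 = 0.
Proof. have h := hf 1 0 0; rewrite !scale1r addr0 in h.
by apply: (@addIr _ (f 0)); rewrite add0r -h. Qed.
Lemma linD u v : f (u + v) = f u + f v.
Proof. by have := hf 1 u v; rewrite !scale1r. Qed.
Lemma linZ a u : f (a *: u) = a *: f u.
Proof. by have := hf a u 0; rewrite !addr0 lin0 addr0. Qed.
Lemma linN u : f (- u) = - f u.
Proof. by rewrite -scaleN1r linZ scaleN1r. Qed.
Lemma linB u v : f (u - v) = f u - f v.
Proof. by rewrite linD linN. Qed.
Lemma lin_sum I r (P : pred I) (F : I -> V) :
  f (\sum_(i <- r | P i) F i) = \sum_(i <- r | P i) f (F i).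
Proof. exact: (big_morph f linD lin0). Qed.
Lemma lin_linear : linear f. Proof. exact: hf. Qed.
End Lin.

Lemma lin_comp (k : fieldType) (U V W : lmodType k) (f : V -> W) (g : U -> V) :
  lin f -> lin g -> lin (fun x => f (g x)).
Proof. by move=> hf hg a u v; rewrite hg hf. Qed.
Lemma lin_id (k : fieldType) (U : lmodType k) : lin (fun x : U => x).
Proof. by []. Qed.
Lemma lin_scale (k : fieldType) (U : lmodType k) c : lin (fun x : U => c *: x).
Proof. by move=> a u v; rewrite scalerDr !scalerA mulrC. Qed.
Lemma lin_add (k : fieldType) (U V : lmodType k) (f g : U -> V) :
  lin f -> lin g -> lin (fun x => f x + g x).
Proof. by move=> hf hg a u v; rewrite hf hg scalerDr addrACA. Qed.
Lemma lin_sumF (k : fieldType) (U V : lmodType k) I (r : seq I) (F : I -> U -> V) :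
  (forall i, lin (F i)) -> lin (fun x => \sum_(i <- r) F i x).
Proof.
move=> hF a u v; rewrite scaler_sumr -big_split /=; apply: eq_bigr => i _; exact: hF.
Qed.
Definition slin (k : fieldType) (U : lmodType k) (phi : U -> k) :=
  forall a u v, phi (a *: u + v) = a * phi u + phi v.
Lemma lin_smul (k : fieldType) (U V : lmodType k) (phi : U -> k) (w : V) :
  slin phi -> lin (fun x => phi x *: w).
Proof. by move=> hp a u v; rewrite hp scalerDl scalerA. Qed.
Section Pack.
Variables (k : fieldType) (U V : vectType k).
Definition lpack (f : U -> V) (hf : lin f) : {linear U -> V} :=
  HB.pack f (GRing.isLinear.Build _ _ _ _ f hf).
Definition lf (f : U -> V) (hf : lin f) : 'Hom(U, V) := linfun (lpack hf).
Lemma lfE f (hf : lin f) x : lf hf x = f x.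
Proof. exact: (lfunE (lpack hf) x). Qed.
End Pack.

Section Tens.
Variables (k : fieldType) (H : falgType k).
Local Notation d := (hdim H).
Local Notation b := (hbasis H).
Local Notation T2 := (tensor2 H).

Lemma hfree : free b.
Proof. exact: basis_free (vbasisP fullv). Qed.
Lemma coord_b (i j : 'I_d) : coord b i b`_j = (i == j)%:R.
Proof. by rewrite coord_free ?hfree // eq_sym. Qed.
Lemma hexpand (x : H) : x = \sum_i coord b i x *: b`_i.
Proof. exact: coord_vbasis (memvf x). Qed.
Lemma coord_slin i : slin (coord b i).
Proof. by move=> a u v; rewrite linearP. Qed.

Lemma tensE (x y : H) (i j : 'I_d) : tens x y i j = coord b i x * coord b j y.
Proof. by rewrite !mxE big_ord1 !mxE. Qed.
Lemma tens_lin1 (y : H) : lin (fun x => tens x y).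
Proof. move=> a u v; apply/matrixP=> i j; rewrite tensE mxE [X in _ = X + _]mxE !tensE coord_slin. by rewrite mulrDl mulrA. Qed.
Lemma tens_lin2 (x : H) : lin (tens x).
Proof. move=> a u v; apply/matrixP=> i j; rewrite tensE mxE [X in _ = X + _]mxE !tensE coord_slin. by rewrite mulrDr mulrCA. Qed.
Lemma tens_b (i j : 'I_d) : tens b`_i b`_j = delta_mx i j.
Proof. by apply/matrixP=> r c; rewrite tensE !coord_b mxE -natrM mulnb. Qed.

Variable (V : lmodType k).
Implicit Types (F G : H -> H -> V) (T U : T2).

Lemma tsum_lin F : lin (tsum F).
Proof.
move=> a T U; rewrite /tsum scaler_sumr -big_split; apply: eq_bigr => i _ /=.
rewrite scaler_sumr -big_split; apply: eq_bigr => j _ /=.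
by rewrite !mxE scalerDl scalerA.
Qed.
Lemma eq_tsum F G T : (forall a c, F a c = G a c) -> tsum F T = tsum G T.
Proof. by move=> h; apply: eq_bigr=> i _; apply: eq_bigr => j _; rewrite h. Qed.
Lemma eq_tsumb F G T : (forall i j : 'I_d, F b`_i b`_j = G b`_i b`_j) -> tsum F T = tsum G T.
Proof. by move=> h; apply: eq_bigr=> i _; apply: eq_bigr => j _; rewrite h. Qed.
Lemma tsum_comp (W : lmodType k) (L : V -> W) F T :
  lin L -> L (tsum F T) = tsum (fun a c => L (F a c)) T.
Proof.
move=> hL; rewrite /tsum (lin_sum hL); apply: eq_bigr => i _.
by rewrite (lin_sum hL); apply: eq_bigr => j _; rewrite (linZ hL).
Qed.
Lemma tsum_tens F x y : (forall y, lin (F ^~ y)) -> (forall x, lin (F x)) ->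
  tsum F (tens x y) = F x y.
Proof.
move=> h1 h2; rewrite {2}(hexpand x) (lin_sum (h1 y)).
apply: eq_bigr => i _; rewrite (linZ (h1 y)) {2}(hexpand y) (lin_sum (h2 _)) scaler_sumr.
by apply: eq_bigr => j _; rewrite (linZ (h2 _)) scalerA tensE.
Qed.
Lemma tsum_tr F T : tsum F T^T = tsum (fun a c => F c a) T.
Proof.
rewrite /tsum exchange_big; apply: eq_bigr => i _; apply: eq_bigr => j _.
by rewrite mxE.
Qed.
Lemma sum_delta1 (X : lmodType k) (i : 'I_d) (f : 'I_d -> X) :
  \sum_j (j == i)%:R *: f j = f i.
Proof.
rewrite (bigD1 i) //= eqxx scale1r big1 ?addr0 // => j /negbTE ->.
by rewrite scale0r.
Qed.
Lemma tsum_delta F (i j : 'I_d) : tsum F (delta_mx i j) = F b`_i b`_j.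
Proof.
rewrite /tsum -[RHS](sum_delta1 i (fun i' => F b`_i' b`_j)); apply: eq_bigr => i' _.
rewrite -[F b`_i' b`_j](sum_delta1 j (fun j' => F b`_i' b`_j')) scaler_sumr; apply: eq_bigr => j' _.
by rewrite mxE scalerA -natrM mulnb.
Qed.
Lemma tsum_linF (X : lmodType k) (F : X -> H -> H -> V) T :
  (forall a c, lin (fun x => F x a c)) -> lin (fun x => tsum (F x) T).
Proof.
move=> h a u v; rewrite /tsum scaler_sumr -big_split; apply: eq_bigr => i _ /=.
rewrite scaler_sumr -big_split; apply: eq_bigr => j _ /=.
by rewrite h scalerDr !scalerA mulrC.
Qed.
End Tens.

Lemma tsum_id (k : fieldType) (H : falgType k) (T : tensor2 H) : tsum (@tens _ H) T = T.
Proof.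
rewrite {2}(matrix_sum_delta T); apply: eq_bigr => i _; apply: eq_bigr => j _.
by rewrite tens_b.
Qed.

Section TSpace.
Variables (k : fieldType) (H : falgType k).
Local Notation d := (hdim H).
Local Notation b := (hbasis H).
Local Notation T2 := (tensor2 H).

Lemma tens_mem (U V : {vspace H}) u v : u \in U -> v \in V -> tens u v \in tspace U V.
Proof.
move=> /coord_vbasis-> /coord_vbasis->.
rewrite (lin_sum (tens_lin1 _)); apply: memv_suml => i _.
rewrite (linZ (tens_lin1 _)); apply: memvZ.
rewrite (lin_sum (tens_lin2 _)); apply: memv_suml => j _.
rewrite (linZ (tens_lin2 _)); apply: memvZ.
apply: memv_span; apply/allpairsP; exists ((vbasis U)`_i, (vbasis V)`_j).
by rewrite !mem_nth ?size_tuple.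
Qed.

Lemma tspace_ind (X : vectType k) (W : {vspace X}) (Phi : T2 -> X) (U V : {vspace H}) T :
  lin Phi -> (forall u v, u \in U -> v \in V -> Phi (tens u v) \in W) ->
  T \in tspace U V -> Phi T \in W.
Proof.
move=> hP hW hT; rewrite -(lfE hP) memv_preim.
apply: subvP hT; apply/span_subvP => _ /allpairsP[[u v] /= [hu hv ->]].
by rewrite -memv_preim lfE hW ?vbasis_mem.
Qed.

Lemma tspaceS (U U' V V' : {vspace H}) :
  (U <= U')%VS -> (V <= V')%VS -> (tspace U V <= tspace U' V')%VS.
Proof.
move=> sU sV; apply/subvP => T hT.
apply: (tspace_ind (Phi := id) _ _ hT) => // u v hu hv.
by apply: tens_mem; [apply: (subvP sU) | apply: (subvP sV)].
Qed.
End TSpace.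

Section Hopf1.
Variables (k : fieldType) (H : falgType k).
Local Notation d := (hdim H).
Local Notation b := (hbasis H).
Local Notation T2 := (tensor2 H).
Variables (D : H -> T2) (e : H -> k) (S : H -> H).
Hypothesis hH : is_hopf D e S.
Hypothesis cc : cocommutative D.

Lemma linDh : lin D. Proof. by case: hH => -[h _] _ _ _ _. Qed.
Lemma lin_e : slin e. Proof. by case: hH => -[_ [h _]] _ _ _ _. Qed.
Lemma linS : lin S. Proof. by case: hH => -[_ [_ h]] _ _ _ _. Qed.
Lemma coas x : tsum (fun a c => tsum (fun a1 a2 => tens3 a1 a2 c) (D a)) (D x)
              = tsum (fun a c => tsum (fun c1 c2 => tens3 a c1 c2) (D c)) (D x).
Proof. by case: hH => _ h _ _ _. Qed.
Lemma cu1 x : tsum (fun a c => e a *: c) (D x) = x.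
Proof. by case: hH => _ _ h _ _; case: (h x). Qed.
Lemma cu2 x : tsum (fun a c => e c *: a) (D x) = x.
Proof. by case: hH => _ _ h _ _; case: (h x). Qed.
Lemma D1 : D 1 = tens 1 1. Proof. by case: hH => _ _ _ [[h _] _] _. Qed.
Lemma Dm x y : D (x * y) = tmul (D x) (D y). Proof. by case: hH => _ _ _ [[_ h] _] _. Qed.
Lemma e1 : e 1 = 1. Proof. by case: hH => _ _ _ [_ [h _]] _. Qed.
Lemma em x y : e (x * y) = e x * e y. Proof. by case: hH => _ _ _ [_ [_ h]] _. Qed.
Lemma an1 x : tsum (fun a c => S a * c) (D x) = e x *: 1.
Proof. by case: hH => _ _ _ _ h; case: (h x). Qed.
Lemma an2 x : tsum (fun a c => a * S c) (D x) = e x *: 1.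
Proof. by case: hH => _ _ _ _ h; case: (h x). Qed.

Definition t3 (V : lmodType k) (G : H -> H -> H -> V) (M : tensor3 H) : V :=
  \sum_i \sum_j \sum_l M i (mxvec_index j l) *: G b`_i b`_j b`_l.

Lemma t3_lin (V : lmodType k) (G : H -> H -> H -> V) : lin (t3 G).
Proof.
move=> a M N; rewrite /t3 scaler_sumr -big_split; apply: eq_bigr => i _ /=.
rewrite scaler_sumr -big_split; apply: eq_bigr => j _ /=.
rewrite scaler_sumr -big_split; apply: eq_bigr => l _ /=.
by rewrite !mxE scalerDl scalerA.
Qed.

Lemma t3_tens (V : lmodType k) (G : H -> H -> H -> V) (i j l : 'I_d) :
  t3 G (tens3 b`_i b`_j b`_l) = G b`_i b`_j b`_l.
Proof.
rewrite /t3 -[RHS](sum_delta1 i (fun i' => G b`_i' b`_j b`_l)); apply: eq_bigr => i' _.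
rewrite -[G b`_i' b`_j b`_l](sum_delta1 j (fun j' => G b`_i' b`_j' b`_l)) scaler_sumr.
apply: eq_bigr => j' _.
rewrite -[G b`_i' b`_j' b`_l](sum_delta1 l (fun l' => G b`_i' b`_j' b`_l')) !scaler_sumr.
apply: eq_bigr => l' _.
by rewrite !mxE big_ord1 mxE mxvecE tensE !coord_b !scalerA mulrA.
Qed.

Lemma coassocG (V : lmodType k) (G : H -> H -> H -> V) x :
  tsum (fun a c => tsum (fun a1 a2 => G a1 a2 c) (D a)) (D x)
  = tsum (fun a c => tsum (fun c1 c2 => G a c1 c2) (D c)) (D x).
Proof.
have := congr1 (t3 G) (coas x).
rewrite !(tsum_comp _ _ (t3_lin G)).
under eq_tsum do rewrite (tsum_comp _ _ (t3_lin G)).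
under [RHS]eq_tsum do rewrite (tsum_comp _ _ (t3_lin G)).
move=> h.
transitivity (tsum (fun a c => tsum (fun a1 a2 => t3 G (tens3 a1 a2 c)) (D a)) (D x)).
  by apply: eq_tsumb => i j; apply: eq_tsumb => i' j'; rewrite t3_tens.
rewrite h; apply: eq_tsumb => i j; apply: eq_tsumb => i' j'; exact: t3_tens.
Qed.
End Hopf1.

Definition bil (k : fieldType) (H : falgType k) (V : lmodType k) (F : H -> H -> V) :=
  (forall y, lin (F ^~ y)) /\ (forall x, lin (F x)).

Section Gen.
Variables (k : fieldType) (H : falgType k).
Local Notation d := (hdim H).
Local Notation b := (hbasis H).
Local Notation T2 := (tensor2 H).

Lemma lin_mull (x : H) : lin (fun y => x * y).
Proof. by move=> a u v; rewrite mulrDr scalerAr. Qed.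
Lemma lin_mulr (x : H) : lin (fun y => y * x).
Proof. by move=> a u v; rewrite mulrDl scalerAl. Qed.
Lemma bil_tens (f g : H -> H) : lin f -> lin g -> bil (fun a c => tens (f a) (g c)).
Proof.
move=> hf hg; split=> [y|x]; first exact: lin_comp (tens_lin1 _) hf.
exact: lin_comp (tens_lin2 _) hg.
Qed.
Lemma tsum_exch (V : lmodType k) (F : H -> H -> H -> H -> V) (T U : T2) :
  tsum (fun a c => tsum (F a c) U) T = tsum (fun p q => tsum (fun a c => F a c p q) T) U.
Proof.
rewrite /tsum.
transitivity (\sum_i \sum_j \sum_i' \sum_j' (T i j * U i' j') *: F b`_i b`_j b`_i' b`_j').
  apply: eq_bigr => i _; apply: eq_bigr => j _; rewrite scaler_sumr.
  apply: eq_bigr => i' _; rewrite scaler_sumr; apply: eq_bigr => j' _; by rewrite scalerA.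
symmetry.
transitivity (\sum_i' \sum_j' \sum_i \sum_j (T i j * U i' j') *: F b`_i b`_j b`_i' b`_j').
  apply: eq_bigr => i _; apply: eq_bigr => j _; rewrite scaler_sumr.
  apply: eq_bigr => i' _; rewrite scaler_sumr; apply: eq_bigr => j' _; by rewrite scalerA mulrC.
under eq_bigr do rewrite exchange_big.
rewrite exchange_big; apply: eq_bigr => i _.
under eq_bigr do rewrite exchange_big.
by rewrite exchange_big.
Qed.

Lemma tmul_lin1 (U : T2) : lin (fun T : T2 => tmul T U).
Proof. exact: tsum_lin. Qed.
Lemma tmul_lin2 (T : T2) : lin (tmul T).
Proof.
apply: (@tsum_linF _ _ _ _ (fun U a c => tsum (fun a' c' => tens (a * a') (c * c')) U)).
by move=> a c; apply: tsum_lin.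
Qed.
Lemma bil_tmulF (U : T2) : bil (fun a c => tsum (fun a' c' => tens (a * a') (c * c')) U).
Proof.
split=> [y|x].
  apply: (@tsum_linF _ _ _ _ (fun a a' c' => tens (a * a') (y * c'))) => a' c'.
  exact: lin_comp (tens_lin1 _) (lin_mulr _).
apply: (@tsum_linF _ _ _ _ (fun c a' c' => tens (x * a') (c * c'))) => a' c'.
exact: lin_comp (tens_lin2 _) (lin_mulr _).
Qed.

Lemma tsum_tmul (V : lmodType k) (G : H -> H -> V) (T U : T2) : bil G ->
  tsum G (tmul T U) = tsum (fun a c => tsum (fun a' c' => G (a * a') (c * c')) U) T.
Proof.
move=> [g1 g2]; rewrite /tmul (tsum_comp _ _ (tsum_lin G)); apply: eq_tsum => a c.
rewrite (tsum_comp _ _ (tsum_lin G)); apply: eq_tsum => a' c'.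
exact: tsum_tens.
Qed.

Lemma tmul_tensl (x y : H) (U : T2) : tmul (tens x y) U = tsum (fun a c => tens (x * a) (y * c)) U.
Proof. by rewrite /tmul tsum_tens //; case: (bil_tmulF U). Qed.
Lemma tmul_tensr (T : T2) (x y : H) : tmul T (tens x y) = tsum (fun a c => tens (a * x) (c * y)) T.
Proof.
rewrite /tmul; apply: eq_tsum => a c; rewrite tsum_tens //.
  by move=> z; apply: lin_comp (tens_lin1 _) (lin_mull _).
by move=> z; apply: lin_comp (tens_lin2 _) (lin_mull _).
Qed.
Lemma tmul1 (U : T2) : tmul (tens 1 1) U = U.
Proof. by rewrite tmul_tensl -[RHS]tsum_id; apply: eq_tsum => a c; rewrite !mul1r. Qed.

Lemma tmulA (A B C : T2) : tmul (tmul A B) C = tmul A (tmul B C).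
Proof.
rewrite {1}/tmul tsum_tmul; last exact: bil_tmulF.
rewrite /tmul; apply: eq_tsum => a c.
rewrite -/(tmul B C) tsum_tmul; last exact: bil_tens (lin_mull _) (lin_mull _).
apply: eq_tsum => a' c'; apply: eq_tsum => a'' c''; by rewrite !mulrA.
Qed.
End Gen.

Section Hopf2.
Variables (k : fieldType) (H : falgType k).
Local Notation d := (hdim H).
Local Notation b := (hbasis H).
Local Notation T2 := (tensor2 H).
Variables (D : H -> T2) (e : H -> k) (S : H -> H).
Hypothesis hH : is_hopf D e S.
Hypothesis cc : cocommutative D.

Lemma cocomG (V : lmodType k) (F : H -> H -> V) x :
  tsum F (D x) = tsum (fun a c => F c a) (D x).
Proof. by rewrite -{1}(cc x) tsum_tr. Qed.

Lemma counitL (V : lmodType k) (L : H -> V) x : lin L ->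
  tsum (fun a c => e a *: L c) (D x) = L x.
Proof.
move=> hL; rewrite -{2}(cu1 hH x) (tsum_comp _ _ hL).
by apply: eq_tsum => a c; rewrite (linZ hL).
Qed.
Lemma counitR (V : lmodType k) (L : H -> V) x : lin L ->
  tsum (fun a c => e c *: L a) (D x) = L x.
Proof.
move=> hL; rewrite -{2}(cu2 hH x) (tsum_comp _ _ hL).
by apply: eq_tsum => a c; rewrite (linZ hL).
Qed.
Lemma antiL (V : lmodType k) (L : H -> V) x : lin L ->
  tsum (fun a c => L (S a * c)) (D x) = e x *: L 1.
Proof. by move=> hL; rewrite -(linZ hL) -(an1 hH) (tsum_comp _ _ hL). Qed.
Lemma antiR (V : lmodType k) (L : H -> V) x : lin L ->
  tsum (fun a c => L (a * S c)) (D x) = e x *: L 1.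
Proof. by move=> hL; rewrite -(linZ hL) -(an2 hH) (tsum_comp _ _ hL). Qed.

Lemma tsum_Dm (V : lmodType k) (G : H -> H -> V) x y : bil G ->
  tsum G (D (x * y)) = tsum (fun a c => tsum (fun a' c' => G (a * a') (c * c')) (D y)) (D x).
Proof. by move=> hG; rewrite (Dm hH) tsum_tmul. Qed.

Lemma DSmulD a : tsum (fun a1 a2 => tmul (D (S a1)) (D a2)) (D a) = e a *: tens 1 1.
Proof.
under eq_tsum do rewrite -(Dm hH).
by rewrite (antiL _ (linDh hH)) (D1 hH).
Qed.

Definition gS x := tsum (fun a c => tens (S c) (S a)) (D x).

Lemma lin_gS : lin gS.
Proof. exact: lin_comp (tsum_lin _) (linDh hH). Qed.

Lemma Dg x : tsum (fun a c => tmul (D a) (gS c)) (D x) = e x *: tens 1 1.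
Proof.
have lSh := linS hH.
transitivity (tsum (fun a c => tsum (fun a1 a2 =>
     tsum (fun p q => tens (a1 * S q) (a2 * S p)) (D c)) (D a)) (D x)).
  apply: eq_tsum => a c; rewrite /gS (tsum_comp _ _ (tmul_lin2 _)).
  rewrite tsum_exch; apply: eq_tsum => p q; exact: tmul_tensr.
rewrite (coassocG hH (fun a1 a2 c => tsum (fun p q => tens (a1 * S q) (a2 * S p)) (D c))).
transitivity (tsum (fun a c => tens (a * S c) 1) (D x)).
  apply: eq_tsum => a c.
  rewrite -(coassocG hH (fun c1 p q => tens (a * S q) (c1 * S p))).
  transitivity (tsum (fun r q => e r *: tens (a * S q) 1) (D c)).
    apply: eq_tsum => r q; rewrite -(tsum_comp (fun c1 p => c1 * S p) _ (tens_lin2 (a * S q))) (an2 hH).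
    by rewrite (linZ (tens_lin2 _)).
  by rewrite (counitL _ (lin_comp (tens_lin1 _) (lin_comp (lin_mull _) lSh))).
by rewrite -(tsum_comp (fun a c => a * S c) _ (tens_lin1 1)) (an2 hH) (linZ (tens_lin1 _)).
Qed.

Lemma DS_op x : D (S x) = gS x.
Proof.
have lDS : lin (fun z => D (S z)) := lin_comp (linDh hH) (linS hH).
rewrite -(counitR _ lDS).
transitivity (tsum (fun a c => tmul (D (S a)) (tsum (fun p q => tmul (D p) (gS q)) (D c))) (D x)).
  apply: eq_tsum => a c; rewrite Dg; rewrite (linZ (tmul_lin2 _)).
  rewrite tmul_tensr; under eq_tsum do rewrite !mulr1.
  by rewrite tsum_id.
under eq_tsum do rewrite (tsum_comp _ _ (tmul_lin2 _)).
rewrite -(coassocG hH (fun a p q => tmul (D (S a)) (tmul (D p) (gS q)))).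
under eq_tsum do under eq_tsum do rewrite -tmulA.
under eq_tsum do rewrite -(tsum_comp _ _ (tmul_lin1 _)) DSmulD (linZ (tmul_lin1 _)) tmul1.
exact: (counitL _ lin_gS).
Qed.

Lemma DS x : D (S x) = tsum (fun a c => tens (S a) (S c)) (D x).
Proof. by rewrite DS_op /gS cocomG. Qed.
End Hopf2.

Section Gen2.
Variables (k : fieldType) (H : falgType k).
Local Notation d := (hdim H).
Local Notation b := (hbasis H).
Local Notation T2 := (tensor2 H).

Lemma tsum_mem (X : vectType k) (W : {vspace X}) (F : H -> H -> X) (T : T2) :
  (forall i j : 'I_d, F b`_i b`_j \in W) -> tsum F T \in W.
Proof.
move=> h; apply: memv_suml => i _; apply: memv_suml => j _; exact: memvZ.
Qed.

Lemma tsum_sumF (V : lmodType k) (I : Type) (r : seq I) (F : I -> H -> H -> V) (T : T2) :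
  tsum (fun a c => \sum_(j <- r) F j a c) T = \sum_(j <- r) tsum (F j) T.
Proof.
rewrite /tsum; under eq_bigr do under eq_bigr do rewrite scaler_sumr.
under eq_bigr do rewrite exchange_big.
by rewrite exchange_big.
Qed.

Definition conr (phi : H -> k) (T : T2) := tsum (fun a c => phi c *: a) T.
Definition conl (phi : H -> k) (T : T2) := tsum (fun a c => phi a *: c) T.

Lemma conr_mem phi (U V : {vspace H}) T : slin phi -> T \in tspace U V -> conr phi T \in U.
Proof.
move=> hp hT; apply: (tspace_ind (Phi := conr phi) _ _ hT); first exact: tsum_lin.
move=> u v hu hv; rewrite /conr tsum_tens ?memvZ //.
  by move=> y; apply: lin_scale.
by move=> x; apply: lin_smul.
Qed.
Lemma conl_mem phi (U V : {vspace H}) T : slin phi -> T \in tspace U V -> conl phi T \in V.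
Proof.
move=> hp hT; apply: (tspace_ind (Phi := conl phi) _ _ hT); first exact: tsum_lin.
move=> u v hu hv; rewrite /conl tsum_tens ?memvZ //.
  by move=> y; apply: lin_smul.
by move=> x; apply: lin_scale.
Qed.

Lemma expand_r (T : T2) : T = \sum_(j < d) tens (conr (coord b j) T) b`_j.
Proof.
transitivity (\sum_(j < d) tsum (fun a c => coord b j c *: tens a b`_j) T).
  rewrite -tsum_sumF -[LHS]tsum_id; apply: eq_tsum => a c.
  rewrite {1}(hexpand c) (lin_sum (tens_lin2 _)); apply: eq_bigr => j _.
  by rewrite (linZ (tens_lin2 _)).
apply: eq_bigr => j _; rewrite /conr (tsum_comp _ _ (tens_lin1 _)).
by apply: eq_tsum => a c; rewrite (linZ (tens_lin1 _)).
Qed.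
Lemma expand_l (T : T2) : T = \sum_(j < d) tens b`_j (conl (coord b j) T).
Proof.
transitivity (\sum_(j < d) tsum (fun a c => coord b j a *: tens b`_j c) T).
  rewrite -tsum_sumF -[LHS]tsum_id; apply: eq_tsum => a c.
  rewrite {1}(hexpand a) (lin_sum (tens_lin1 _)); apply: eq_bigr => j _.
  by rewrite (linZ (tens_lin1 _)).
apply: eq_bigr => j _; rewrite /conl (tsum_comp _ _ (tens_lin2 _)).
by apply: eq_tsum => a c; rewrite (linZ (tens_lin2 _)).
Qed.

Definition idt (f : H -> H) (T : T2) := tsum (fun a c => tens a (f c)) T.
Lemma idt_lin f : lin (idt f). Proof. exact: tsum_lin. Qed.
Lemma idt_tens f x y : lin f -> idt f (tens x y) = tens x (f y).
Proof. move=> hf; rewrite /idt tsum_tens //; [move=> z; exact: tens_lin1 | by move=> z; apply: lin_comp (tens_lin2 _) hf]. Qed.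
Lemma idt_mem f (U V V' : {vspace H}) T : lin f -> (forall v, v \in V -> f v \in V') ->
  T \in tspace U V -> idt f T \in tspace U V'.
Proof.
move=> hf hV hT; apply: (tspace_ind _ _ hT); first exact: idt_lin.
by move=> u v hu hv; rewrite idt_tens // tens_mem // hV.
Qed.

Lemma tspace_cap (U V : {vspace H}) (T : T2) (y z : 'I_d -> H) :
  (forall j, y j \in U) -> (forall j, z j \in V) ->
  T = \sum_(j < d) tens (y j) b`_j -> T = \sum_(j < d) tens b`_j (z j) -> T \in tspace U V.
Proof.
move=> hy hz e1 e2.
have lP : lin (projv V) by move=> a u v; rewrite linearP.
have -> : T = idt (projv V) T.
  rewrite {2}e2 (lin_sum (idt_lin _)) {1}e2; apply: eq_bigr => j _.
  by rewrite idt_tens // projv_id.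
rewrite e1 (lin_sum (idt_lin _)); apply: memv_suml => j _.
by rewrite idt_tens // tens_mem // memv_proj.
Qed.
End Gen2.

Section Hopf3.
Variables (k : fieldType) (H : falgType k).
Local Notation d := (hdim H).
Local Notation b := (hbasis H).
Local Notation T2 := (tensor2 H).
Variables (D : H -> T2) (e : H -> k) (S : H -> H).
Hypothesis hH : is_hopf D e S.
Hypothesis cc : cocommutative D.

Lemma linfunD x : linfun D x = D x.
Proof. exact: (lfE (linDh hH) x). Qed.

Lemma line1_coalg : subcoalgebra D <[1]>%VS.
Proof.
move=> x /vlineP[c ->]; rewrite (linZ (linDh hH)) (D1 hH).
by apply: memvZ; apply: tens_mem; apply: memv_line.
Qed.

Lemma C0_eq C0 : is_coradical D C0 -> \dim C0 = 1%N -> C0 = <[1]>%VS.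
Proof.
move=> [hC _] hd.
have sc1 : simple_subcoalgebra D <[1]>%VS.
  split; first exact: line1_coalg.
    by rewrite -dimv_eq0 dim_vline oner_neq0.
  move=> C' _ sub; have := dimvS sub; rewrite dim_vline oner_neq0.
  case: (boolP (\dim C' == 0%N)) => [/eqP h0 _|h0 _].
    by left; apply/eqP; rewrite -dimv_eq0 h0.
  right; apply/eqP; rewrite eqEdim sub /= dim_vline oner_neq0.
  by rewrite lt0n.
have s := hC _ sc1.
apply/eqP; rewrite eq_sym eqEdim s /= dim_vline oner_neq0 hd.
by [].
Qed.

Local Notation Hf := (coradfilt D <[1]>%VS).

Lemma memHfS x m :
  (x \in Hf m.+1) = (D x \in (tspace fullv (Hf m) + tspace <[1]> fullv)%VS).
Proof. by rewrite /= -memv_preim linfunD. Qed.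

Lemma D_conr phi x : slin phi ->
  D (conr phi (D x)) = idt (fun c => conr phi (D c)) (D x).
Proof.
move=> hp; rewrite /conr (tsum_comp _ _ (linDh hH)).
transitivity (tsum (fun a c => tsum (fun a1 a2 => phi c *: tens a1 a2) (D a)) (D x)).
  apply: eq_tsum => a c; rewrite (linZ (linDh hH)).
  by rewrite -{1}(tsum_id (D a)) (tsum_comp _ _ (lin_scale _)).
rewrite (coassocG hH (fun a1 a2 c => phi c *: tens a1 a2)).
rewrite /idt; apply: eq_tsum => a c.
rewrite (tsum_comp _ _ (tens_lin2 _)); apply: eq_tsum => c1 c2.
by rewrite (linZ (tens_lin2 _)).
Qed.

Lemma Hf_coalg m x : x \in Hf m -> D x \in tspace (Hf m) (Hf m).
Proof.
elim: m x => [|m IH] x; first exact: line1_coalg.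
move=> hx.
pose y (j : 'I_d) := conr (coord b j) (D x).
have hy : forall j, y j \in Hf m.+1.
  move=> j; rewrite memHfS /y (D_conr _ (coord_slin j)).
  move: hx; rewrite memHfS => /memv_addP[T1 h1 [T2 h2 ->]].
  have lpsi : lin (fun c => conr (coord b j) (D c)).
    exact: lin_comp (tsum_lin _) (linDh hH).
  rewrite (linD (idt_lin _)); apply: memv_add.
    apply: (idt_mem lpsi _ h1) => v hv.
    by apply: conr_mem (IH _ hv); apply: coord_slin.
  by apply: (idt_mem lpsi _ h2) => v _; apply: memvf.
apply: (tspace_cap hy hy).
  exact: expand_r.
rewrite {1}(expand_l (D x)); apply: eq_bigr => j _; congr tens.
by rewrite /y /conr /conl (cocomG cc).
Qed.
End Hopf3.

Lemma tmul_mem (k : fieldType) (H : falgType k) (A : {vspace H}) (T U : tensor2 H) :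
  (A * A <= A)%VS -> T \in tspace A A -> U \in tspace A A -> tmul T U \in tspace A A.
Proof.
move=> hA hT hU.
apply: (tspace_ind (Phi := fun T => tmul T U) _ _ hT); first exact: tmul_lin1.
move=> a c ha hc; rewrite tmul_tensl.
apply: (tspace_ind _ _ hU); first exact: tsum_lin.
move=> u v hu hv; rewrite tsum_tens; last first.
- by case: (bil_tens (lin_mull a) (lin_mull c)).
- by case: (bil_tens (lin_mull a) (lin_mull c)).
by apply: tens_mem; apply: (subvP hA); apply: memv_mul.
Qed.

Section Hopf4.
Variables (k : fieldType) (H : falgType k).
Local Notation d := (hdim H).
Local Notation b := (hbasis H).
Local Notation T2 := (tensor2 H).
Variables (D : H -> T2) (e : H -> k) (S : H -> H).
Hypothesis hH : is_hopf D e S.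

Lemma agenv_coalg (U : {vspace H}) : subcoalgebra D U -> subcoalgebra D (agenv U).
Proof.
move=> hU.
have hAA : (agenv U * agenv U <= agenv U)%VS by rewrite agenvM subvv.
suff sW : (agenv U <= lf (linDh hH) @^-1: tspace (agenv U) (agenv U))%VS.
  by move=> x /(subvP sW); rewrite -memv_preim lfE.
apply: agenv_sub_modl.
  rewrite -memvE -memv_preim lfE (D1 hH).
  by apply: tens_mem; rewrite memvE; apply: sub1_agenv.
apply/prodvP => u w hu hw; rewrite -memv_preim lfE (Dm hH).
apply: tmul_mem => //; last by move: hw; rewrite -memv_preim lfE.
by apply: (subvP (tspaceS (sub_agenv U) (sub_agenv U))); apply: hU.
Qed.

Definition phiT (T : T2) := tsum (fun a c => tmul (tens a 1) (D c)) T.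
Definition psiF (a c : H) := tsum (fun c1 c2 => tens (a * S c1) c2) (D c).
Definition psiT (T : T2) := tsum psiF T.

Lemma psiF_bil : bil psiF.
Proof.
split=> [y|x]; last exact: lin_comp (tsum_lin _) (linDh hH).
apply: (@tsum_linF _ _ _ _ (fun a c1 c2 => tens (a * S c1) c2)) => c1 c2.
exact: lin_comp (tens_lin1 _) (lin_mulr _).
Qed.

Lemma psi_phi T : psiT (phiT T) = T.
Proof.
rewrite /psiT /phiT (tsum_comp _ _ (tsum_lin _)) -[RHS]tsum_id; apply: eq_tsum => a c.
rewrite tmul_tensl (tsum_comp _ _ (tsum_lin _)).
have [p1 p2] := psiF_bil.
under eq_tsum do rewrite tsum_tens // /psiF mul1r.
rewrite -(coassocG hH (fun a' q1 q2 => tens (a * a' * S q1) q2)).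
transitivity (tsum (fun r q2 => e r *: tens a q2) (D c)).
  apply: eq_tsum => r q2.
  under eq_tsum do rewrite -mulrA.
  rewrite (antiR hH _ (lin_comp (tens_lin1 q2) (lin_mull a))).
  by rewrite mulr1.
exact: (counitL hH _ (tens_lin2 _)).
Qed.

Lemma S_stable (K : {vspace H}) : 1 \in K -> (K * K <= K)%VS -> subcoalgebra D K ->
  forall x, x \in K -> S x \in K.
Proof.
move=> h1 hKK hK x hx.
have lphi : lin phiT by exact: tsum_lin.
have phiV : forall T, T \in tspace K K -> phiT T \in tspace K K.
  move=> T hT; apply: (tspace_ind _ _ hT) => // a c ha hc.
  rewrite /phiT tsum_tens; last first.
  - by move=> y; exact: lin_comp (tmul_lin2 _) (linDh hH).
  - by move=> y; exact: lin_comp (tmul_lin1 _) (tens_lin1 _).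
  by apply: tmul_mem => //; [apply: tens_mem | apply: hK].
pose f := lf lphi.
have inj : lker f == 0%VS.
  by apply/lker0P => u v; rewrite !lfE => h; rewrite -(psi_phi u) h psi_phi.
have eqV : (f @: tspace K K)%VS = tspace K K.
  apply/eqP; rewrite eqEdim limg_dim_eq ?leqnn ?andbT; last by rewrite (eqP inj) capv0.
  by apply/subvP => _ /memv_imgP[T hT ->]; rewrite lfE phiV.
have : tens 1 x \in (f @: tspace K K)%VS by rewrite eqV tens_mem.
case/memv_imgP => T hT; rewrite lfE => hT1.
have : conr e (psiT (tens 1 x)) \in K.
  by rewrite hT1 psi_phi; apply: (conr_mem (lin_e hH) hT).
have [p1 p2] := psiF_bil.
rewrite /psiT tsum_tens // /psiF /conr (tsum_comp _ _ (tsum_lin _)).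
rewrite (eq_tsum (G := fun a c => e c *: S a)); first by rewrite (counitR hH _ (linS hH)).
move=> a c; rewrite tsum_tens ?mul1r //.
- by move=> z; apply: lin_scale.
- by move=> z; apply: lin_smul (lin_e hH).
Qed.
End Hopf4.

Section Gen3.
Variables (k : fieldType) (H : falgType k).
Local Notation T2 := (tensor2 H).
Lemma tsum_tsum_tens (V : lmodType k) (F : H -> H -> V) (f g : H -> H) (T : T2) :
  bil F -> lin f -> lin g ->
  tsum F (tsum (fun a c => tens (f a) (g c)) T) = tsum (fun a c => F (f a) (g c)) T.
Proof.
move=> [h1 h2] hf hg; rewrite (tsum_comp _ _ (tsum_lin _)); apply: eq_tsum => a c.
exact: tsum_tens.
Qed.

Lemma tmul3 (T1 T2' T3 : T2) : tmul (tmul T1 T2') T3 =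
  tsum (fun a c => tsum (fun a' c' => tsum (fun a'' c'' =>
     tens (a * a' * a'') (c * c' * c'')) T3) T2') T1.
Proof.
rewrite {1}/tmul tsum_tmul; last exact: bil_tmulF.
by apply: eq_tsum => a c; apply: eq_tsum => a' c'.
Qed.
End Gen3.

Section Hopf5.
Variables (k : fieldType) (H : falgType k).
Local Notation d := (hdim H).
Local Notation b := (hbasis H).
Local Notation T2 := (tensor2 H).
Variables (D : H -> T2) (e : H -> k) (S : H -> H).
Hypothesis hH : is_hopf D e S.
Hypothesis cc : cocommutative D.

Lemma swap4 (V : lmodType k) (K : H -> H -> H -> H -> V) h :
  tsum (fun u v => tsum (fun u1 u2 => tsum (fun v1 v2 => K u1 u2 v1 v2) (D v)) (D u)) (D h)
  = tsum (fun u v => tsum (fun u1 u2 => tsum (fun v1 v2 => K u1 v1 u2 v2) (D v)) (D u)) (D h).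
Proof.
rewrite (coassocG hH (fun u1 u2 v => tsum (fun v1 v2 => K u1 u2 v1 v2) (D v))).
rewrite (coassocG hH (fun u1 u2 v => tsum (fun v1 v2 => K u1 v1 u2 v2) (D v))).
apply: eq_tsum => u w.
rewrite -(coassocG hH (fun a c1 c2 => K u a c1 c2)).
under eq_tsum do rewrite (cocomG cc).
by rewrite (coassocG hH (fun a1 a2 c => K u a2 a1 c)).
Qed.
End Hopf5.

Section Ad.
Variables (k : fieldType) (H : falgType k).
Local Notation d := (hdim H).
Local Notation b := (hbasis H).
Local Notation T2 := (tensor2 H).
Variables (D : H -> T2) (e : H -> k) (S : H -> H).
Hypothesis hH : is_hopf D e S.
Hypothesis cc : cocommutative D.
Variables (f g : H -> H).
Hypotheses (hlf : lin f) (hlg : lin g).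
Hypothesis hDf : forall a, D (f a) = tsum (fun p q => tens (f p) (f q)) (D a).
Hypothesis hDg : forall a, D (g a) = tsum (fun p q => tens (g p) (g q)) (D a).
Hypothesis hfg : forall h, tsum (fun a c => f a * g c) (D h) = e h *: 1.
Hypothesis hgf : forall h, tsum (fun a c => g a * f c) (D h) = e h *: 1.

Definition adg (h x : H) := tsum (fun a c => f a * x * g c) (D h).

Lemma adg_lin h : lin (adg h).
Proof.
apply: (@tsum_linF _ _ _ _ (fun x a c => f a * x * g c)) => a c.
exact: lin_comp (lin_mulr _) (lin_mull _).
Qed.
Lemma adg_linh x : lin (fun h => adg h x).
Proof. exact: lin_comp (tsum_lin _) (linDh hH). Qed.

Lemma adg1 h : adg h 1 = e h *: 1.
Proof. by rewrite /adg -hfg; apply: eq_tsum => a c; rewrite mulr1. Qed.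

Lemma D_fxg p x q : D (f p * x * g q) =
  tsum (fun a c => tsum (fun p1 p2 => tsum (fun q1 q2 =>
     tens (f p1 * a * g q1) (f p2 * c * g q2)) (D q)) (D p)) (D x).
Proof.
rewrite !(Dm hH) tmul3 hDf tsum_tsum_tens //; last first.
  split=> [y|z].
    apply: (@tsum_linF _ _ _ _ (fun a a' c' => tsum _ _)) => a' c'.
    apply: (@tsum_linF _ _ _ _ (fun a a'' c'' => tens (a * a' * a'') (y * c' * c''))) => a'' c''.
    exact: lin_comp (tens_lin1 _) (lin_comp (lin_mulr _) (lin_mulr _)).
  apply: (@tsum_linF _ _ _ _ (fun c a' c' => tsum _ _)) => a' c'.
  apply: (@tsum_linF _ _ _ _ (fun c a'' c'' => tens (z * a' * a'') (c * c' * c''))) => a'' c''.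
  exact: lin_comp (tens_lin2 _) (lin_comp (lin_mulr _) (lin_mulr _)).
rewrite tsum_exch; apply: eq_tsum => p1 p2; apply: eq_tsum => a c.
rewrite hDg tsum_tsum_tens //.
exact: bil_tens (lin_mull _) (lin_mull _).
Qed.

Lemma Dad h x : D (adg h x) =
  tsum (fun a c => tsum (fun u v => tens (adg u a) (adg v c)) (D h)) (D x).
Proof.
rewrite /adg (tsum_comp _ _ (linDh hH)).
under eq_tsum do rewrite D_fxg.
rewrite [LHS]tsum_exch; apply: eq_tsum => a c.
rewrite (swap4 hH cc (fun y1 y2 y3 y4 => tens (f y1 * a * g y3) (f y2 * c * g y4))).
apply: eq_tsum => u v.
rewrite (tsum_comp _ _ (tens_lin1 _)); apply: eq_tsum => p q.
by rewrite (tsum_comp _ _ (tens_lin2 _)).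
Qed.

Lemma adg_mul h x y : adg h (x * y) = tsum (fun u v => adg u x * adg v y) (D h).
Proof.
transitivity (tsum (fun u v => tsum (fun u1 u2 => tsum (fun v1 v2 =>
   f u1 * x * g u2 * (f v1 * y * g v2)) (D v)) (D u)) (D h)); last first.
  apply: eq_tsum => u v; rewrite /adg (tsum_comp _ _ (lin_mulr _)).
  by apply: eq_tsum => u1 u2; rewrite (tsum_comp _ _ (lin_mull _)).
rewrite (coassocG hH (fun u1 u2 v => tsum (fun v1 v2 => f u1 * x * g u2 * (f v1 * y * g v2)) (D v))).
apply: eq_tsum => u w.
rewrite -(coassocG hH (fun a c1 c2 => f u * x * g a * (f c1 * y * g c2))).
transitivity (tsum (fun q c2 => e q *: (f u * x * y * g c2)) (D w)); last first.
  apply: eq_tsum => q c2.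
  have hL : lin (fun z => f u * x * z * (y * g c2)).
    exact: lin_comp (lin_mulr _) (lin_mull _).
  have E1 : tsum (fun a c1 => f u * x * g a * (f c1 * y * g c2)) (D q) =
     tsum (fun a c1 => (fun z => f u * x * z * (y * g c2)) (g a * f c1)) (D q).
    by apply: eq_tsum => a c1; rewrite !mulrA.
  by rewrite E1 -(tsum_comp _ _ hL) hgf /= -scalerAr -scalerAl mulr1 !mulrA.
rewrite (counitL hH _ (lin_comp (lin_mull _) hlg)).
by rewrite !mulrA.
Qed.
Local Notation Hf := (coradfilt D <[1]>%VS).

Lemma adg_Hf m : forall h x, x \in Hf m -> adg h x \in Hf m.
Proof.
elim: m => [|m IH] h x.
  move=> /vlineP[c ->]; rewrite (linZ (adg_lin h)) adg1.
  by apply: memvZ; apply: memvZ; apply: memv_line.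
rewrite !(memHfS hH) Dad => /memv_addP[T1 h1 [T2 h2 ->]].
set Phi := fun T => tsum (fun a c => tsum (fun u v => tens (adg u a) (adg v c)) (D h)) T.
have lPhi : lin Phi by apply: tsum_lin.
have bPhi : bil (fun a c => tsum (fun u v => tens (adg u a) (adg v c)) (D h)).
  split=> [y|z].
    apply: (@tsum_linF _ _ _ _ (fun a u v => tens (adg u a) (adg v y))) => u v.
    exact: lin_comp (tens_lin1 _) (adg_lin _).
  apply: (@tsum_linF _ _ _ _ (fun c u v => tens (adg u z) (adg v c))) => u v.
  exact: lin_comp (tens_lin2 _) (adg_lin _).
have [b1 b2] := bPhi.
rewrite -/(Phi (T1 + T2)) (linD lPhi); apply: memv_add.
  apply: (tspace_ind _ _ h1) => // a c _ hc.
  rewrite /Phi tsum_tens //; apply: tsum_mem => i j.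
  by apply: tens_mem; [apply: memvf | apply: IH].
apply: (tspace_ind _ _ h2) => // a c /vlineP[l ->] _.
rewrite /Phi tsum_tens //.
have hL : lin (fun v => l *: tens 1 (adg v c)).
  exact: lin_comp (lin_scale l) (lin_comp (tens_lin2 1) (adg_linh c)).
rewrite (eq_tsum (G := fun u v => e u *: (l *: tens 1 (adg v c)))).
  by rewrite (counitL hH _ hL); apply: memvZ; apply: tens_mem; [apply: memv_line | apply: memvf].
move=> u v; rewrite (linZ (adg_lin u)) adg1 scalerA (linZ (tens_lin1 _)).
by rewrite mulrC -scalerA.
Qed.
Lemma adg_agenv (U : {vspace H}) : (forall h x, x \in U -> adg h x \in U) ->
  forall h x, x \in agenv U -> adg h x \in agenv U.
Proof.
move=> hU.
set A := agenv U.
have hAA : (A * A <= A)%VS by rewrite /A agenvM subvv.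
have h1A : 1 \in A by rewrite memvE; apply: sub1_agenv.
pose W := (\bigcap_(j < d) (lf (adg_lin b`_j) @^-1: A))%VS.
have memW : forall x, reflect (forall j : 'I_d, adg b`_j x \in A) (x \in W).
  move=> x; rewrite memvE; apply: (iffP subv_bigcapP) => hx j.
    by have := hx j isT; rewrite -memvE -memv_preim lfE.
  by move=> _; rewrite -memvE -memv_preim lfE.
have gen : forall x, x \in W -> forall h, adg h x \in A.
  move=> x /memW hx h; rewrite (hexpand h) (lin_sum (adg_linh x)).
  by apply: memv_suml => j _; rewrite (linZ (adg_linh x)); apply: memvZ.
suff sW : (A <= W)%VS by move=> h x /(subvP sW) /gen; apply.
apply: agenv_sub_modl.
  by rewrite -memvE; apply/memW => j; rewrite adg1; apply: memvZ.
apply/prodvP => u w hu /memW hw; apply/memW => j.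
rewrite adg_mul; apply: tsum_mem => i i'.
apply: (subvP hAA); apply: memv_mul => //.
by apply: (subvP (sub_agenv U)); apply: hU.
Qed.
End Ad.

Section Final.
Variables (k : fieldType) (H : falgType k).
Local Notation T2 := (tensor2 H).
Variables (D : H -> T2) (e : H -> k) (S : H -> H).
Hypothesis hH : is_hopf D e S.
Hypothesis cc : cocommutative D.

Definition idH := fun z : H => z.

Lemma lin_idH : lin idH. Proof. by []. Qed.

Lemma hD_id a : D (idH a) = tsum (fun p q => tens (idH p) (idH q)) (D a).
Proof. by rewrite tsum_id. Qed.

Lemma normal_of (K : {vspace H}) : 1 \in K -> (K * K <= K)%VS -> subcoalgebra D K ->
  (forall h x, x \in K -> adg D idH S h x \in K) ->
  (forall h x, x \in K -> adg D S idH h x \in K) ->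
  normal_hopf_subalgebra D S K.
Proof.
move=> h1 hKK hK ad1 ad2; split; first by split=> //; apply: (S_stable hH).
by move=> x h hx; split; [apply: ad2 | apply: ad1].
Qed.

Local Notation Hf := (coradfilt D <[1]>%VS).

Lemma hfg1 h : tsum (fun a c => idH a * S c) (D h) = e h *: 1.
Proof. exact: an2 hH h. Qed.
Lemma hgf1 h : tsum (fun a c => S a * idH c) (D h) = e h *: 1.
Proof. exact: an1 hH h. Qed.

Lemma adg1_inv m h x : x \in Hf m -> adg D idH S h x \in Hf m.
Proof. exact: (adg_Hf hH cc lin_idH (linS hH) hD_id (DS hH cc) hfg1). Qed.
Lemma adg2_inv m h x : x \in Hf m -> adg D S idH h x \in Hf m.
Proof. exact: (adg_Hf hH cc (linS hH) lin_idH (DS hH cc) hD_id hgf1). Qed.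

Lemma Gamma_normal p n : normal_hopf_subalgebra D S (Gamma D <[1]>%VS p n).
Proof.
case: n => [|m] /=.
  apply: normal_of.
  - exact: memv_line.
  - by rewrite prodv_line mulr1 subvv.
  - exact: line1_coalg hH.
  - by move=> h x hx; exact: (adg1_inv (m := 0)) hx.
  - by move=> h x hx; exact: (adg2_inv (m := 0)) hx.
apply: normal_of.
- by rewrite memvE; apply: sub1_agenv.
- by rewrite agenvM subvv.
- apply: (agenv_coalg hH) => x hx; exact: (Hf_coalg hH cc hx).
- apply: (adg_agenv hH (linS hH) hfg1 hgf1) => h x; exact: adg1_inv.
- apply: (adg_agenv hH lin_idH hgf1 hfg1) => h x; exact: adg2_inv.
Qed.
End Final.

Unset Implicit Arguments. Set Strict Implicit. Set Printing Implicit Defensive.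

Theorem corollary4p6 (k : closedFieldType) (p : nat) (H : falgType k)
    (D : H -> tensor2 H) (e : H -> k) (S : H -> H) (C0 : {vspace H}) :
  prime p -> p \in [pchar k] ->
  is_hopf D e S -> cocommutative D ->
  is_coradical D C0 -> \dim C0 = 1%N ->
  forall n : nat, normal_hopf_subalgebra D S (Gamma D C0 p n).
Proof.
move=> _ _ hH cc hC hd n.
rewrite (C0_eq hH hC hd).
exact: (Gamma_normal hH cc).
Qed.
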